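(* Let $N\ge1$ be an integer, $D>0$, and $q:=\sum_{k=0}^{N}2^{(2k)^3}$. The family of groups $\Gamma$ which admit a proper isometric action on some simply connected length space $(X,d)$ such that $\operatorname{diam}(\Gamma\backslash X)\le D$ and $\#\Sigma_{2D}(x)\le N$ for at least one $x\in X$, has cardinality at most $q$ up to group isomorphism.
   Context: An isometric action of a group $\Gamma$ on a metric space $(X,d)$ is proper if for every $R>0$ and $x\in X$ the set $\{\gamma\in\Gamma: d(x,\gamma x)\le R\}$ is finite. $\operatorname{diam}(\Gamma\backslash X)$ is the diameter of the quotient for the quotient distance $\bar d(\Gamma x,\Gamma y)=\inf_{\gamma\in\Gamma}d(x,\gamma y)$. For $x\in X$ and $R>0$, $\Sigma_R(x):=\{\gamma\in\Gamma: d(x,\gamma x)\le R\}$. *)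

(* Defs.v *)
From Stdlib Require Import Reals List Arith.
Import ListNotations.
Open Scope R_scope.

Record Group : Type := MkGroup {
  carrier :> Type;
  gmul : carrier -> carrier -> carrier;
  gone : carrier;
  ginv : carrier -> carrier;
  gmulA : forall a b c, gmul a (gmul b c) = gmul (gmul a b) c;
  gmul1l : forall a, gmul gone a = a;
  gmul1r : forall a, gmul a gone = a;
  gmulVl : forall a, gmul (ginv a) a = gone;
  gmulVr : forall a, gmul a (ginv a) = gone
}.

Definition group_iso (G H : Group) : Prop :=
  exists f : G -> H,
    (forall a b, f (gmul G a b) = gmul H (f a) (f b)) /\
    (forall a b, f a = f b -> a = b) /\
    (forall y, exists a, f a = y).

Definition is_metric (X : Type) (d : X -> X -> R) : Prop :=
  (forall x y, 0 <= d x y) /\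
  (forall x y, d x y = 0 <-> x = y) /\
  (forall x y, d x y = d y x) /\
  (forall x y z, d x z <= d x y + d y z).

Definition in01 (t : R) : Prop := 0 <= t <= 1.

Definition cont_path {X : Type} (d : X -> X -> R) (g : R -> X) : Prop :=
  forall t, in01 t -> forall eps, 0 < eps -> exists delta, 0 < delta /\
    forall s, in01 s -> Rabs (s - t) < delta -> d (g s) (g t) < eps.

Definition cont_square {X : Type} (d : X -> X -> R) (H : R -> R -> X) : Prop :=
  forall s t, in01 s -> in01 t -> forall eps, 0 < eps -> exists delta, 0 < delta /\
    forall s' t', in01 s' -> in01 t' -> Rabs (s' - s) < delta -> Rabs (t' - t) < delta ->
      d (H s' t') (H s t) < eps.

Fixpoint Rsum_upto (f : nat -> R) (n : nat) : R :=
  match n with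
  | O => 0
  | S m => Rsum_upto f m + f m
  end.

Definition length_le {X : Type} (d : X -> X -> R) (g : R -> X) (L : R) : Prop :=
  forall (n : nat) (t : nat -> R),
    t O = 0 -> t n = 1 -> (forall i, (i < n)%nat -> t i <= t (S i)) ->
    Rsum_upto (fun i => d (g (t i)) (g (t (S i)))) n <= L.

(** length space: d(x,y) is the infimum of lengths of continuous paths from x to y
    (lengths are always >= d(x,y), so it suffices to state the approximation). *)
Definition length_space (X : Type) (d : X -> X -> R) : Prop :=
  forall x y eps, 0 < eps -> exists g : R -> X,
    cont_path d g /\ g 0 = x /\ g 1 = y /\ length_le d g (d x y + eps).

Definition path_connected (X : Type) (d : X -> X -> R) : Prop :=
  (exists x : X, True) /\
  forall x y : X, exists g : R -> X, cont_path d g /\ g 0 = x /\ g 1 = y.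

Definition simply_connected (X : Type) (d : X -> X -> R) : Prop :=
  path_connected X d /\
  forall g : R -> X, cont_path d g -> g 0 = g 1 ->
    exists H : R -> R -> X, cont_square d H /\
      (forall t, in01 t -> H 0 t = g t) /\
      (forall t, in01 t -> H 1 t = g 0) /\
      (forall s, in01 s -> H s 0 = g 0 /\ H s 1 = g 0).

Definition finite_pred {T : Type} (P : T -> Prop) : Prop :=
  exists l : list T, forall a, P a -> In a l.

Definition card_le {T : Type} (P : T -> Prop) (N : nat) : Prop :=
  exists l : list T, (length l <= N)%nat /\ forall a, P a -> In a l.

Definition isometric_action (G : Group) (X : Type) (d : X -> X -> R)
    (act : G -> X -> X) : Prop :=
  (forall x, act (gone G) x = x) /\
  (forall a b x, act (gmul G a b) x = act a (act b x)) /\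
  (forall a x y, d (act a x) (act a y) = d x y).

Definition proper_action (G : Group) (X : Type) (d : X -> X -> R)
    (act : G -> X -> X) : Prop :=
  forall (r : R) (x : X), 0 < r -> finite_pred (fun a : G => d x (act a x) <= r).

(** diam(G\X) <= D for the quotient distance inf_a d(x, a y) *)
Definition quotient_diam_le (G : Group) (X : Type) (d : X -> X -> R)
    (act : G -> X -> X) (D : R) : Prop :=
  forall x y eps, 0 < eps -> exists a : G, d x (act a y) < D + eps.

Definition Sigma (G : Group) (X : Type) (d : X -> X -> R)
    (act : G -> X -> X) (r : R) (x : X) : G -> Prop :=
  fun a => d x (act a x) <= r.

Definition admissible (N : nat) (D : R) (G : Group) : Prop :=
  exists (X : Type) (d : X -> X -> R) (act : G -> X -> X),
    is_metric X d /\ length_space X d /\ simply_connected X d /\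
    isometric_action G X d act /\ proper_action G X d act /\
    quotient_diam_le G X d act D /\
    exists x : X, card_le (Sigma G X d act (2 * D) x) N.

Definition qbound (N : nat) : nat :=
  list_sum (map (fun k => 2 ^ ((2 * k) ^ 3)) (seq 0 (S N)))%nat.

(* Main.v *)
Require Import Defs.
From Stdlib Require Import Reals List Arith Lra Lia Classical ClassicalEpsilon.
Open Scope R_scope.

Local Infix "**" := (gmul _) (at level 40, left associativity).

Section GroupLemmas.
Variable G : Group.
Implicit Types a b c : G.

Lemma gcancel_l a b c : a ** b = a ** c -> b = c.
Proof.
  intro H. rewrite <- (gmul1l G b), <- (gmul1l G c), <- (gmulVl G a), <- !gmulA, H. reflexivity.
Qed.

Lemma gcancel_r a b c : b ** a = c ** a -> b = c.
Proof.
  intro H. rewrite <- (gmul1r G b), <- (gmul1r G c), <- (gmulVr G a), !gmulA, H. reflexivity.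
Qed.

Lemma gidem a : a ** a = a -> a = gone G.
Proof. intro H. apply (gcancel_l a). rewrite H, gmul1r. reflexivity. Qed.

Lemma ginv_one : ginv G (gone G) = gone G.
Proof. rewrite <- (gmul1l G (ginv G (gone G))). apply gmulVr. Qed.

Lemma ginv_mul a b : ginv G (a ** b) = ginv G b ** ginv G a.
Proof.
  apply (gcancel_l (a ** b)). rewrite gmulVr.
  rewrite !gmulA, <- (gmulA _ a b), gmulVr, gmul1r, gmulVr. reflexivity.
Qed.

Lemma ginv_inv a : ginv G (ginv G a) = a.
Proof. apply (gcancel_l (ginv G a)). rewrite gmulVr, gmulVl. reflexivity. Qed.

Lemma ginv_unique a b : a ** b = gone G -> b = ginv G a.
Proof. intro H. apply (gcancel_l a). rewrite H, gmulVr. reflexivity. Qed.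

Lemma gtel a b c : (ginv G a ** b) ** (ginv G b ** c) = ginv G a ** c.
Proof. rewrite !gmulA, <- (gmulA _ _ b), gmulVr, gmul1r. reflexivity. Qed.

Lemma gshift a b c : ginv G (a ** b) ** (a ** c) = ginv G b ** c.
Proof. rewrite ginv_mul, !gmulA, <- (gmulA _ _ (ginv G a)), gmulVl, gmul1r. reflexivity. Qed.

End GroupLemmas.

Definition ishom (G H : Group) (f : G -> H) := forall a b, f (a ** b) = f a ** f b.

Lemma hom_one (G H : Group) (f : G -> H) : ishom G H f -> f (gone G) = gone H.
Proof. intro Hf. apply gidem. rewrite <- Hf, gmul1l. reflexivity. Qed.

Fixpoint prodH (H : Group) (f : nat -> H) (n : nat) : H :=
  match n with O => gone H | S m => prodH H f m ** f m end.

Lemma prodH_ext (H : Group) f g n : (forall i, (i < n)%nat -> f i = g i) -> prodH H f n = prodH H g n.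
Proof.
  induction n; simpl; intros; auto. rewrite IHn by (intros; apply H0; lia). rewrite H0 by lia. auto.
Qed.

Lemma prodH_add (H : Group) f a b : prodH H f (a + b) = prodH H f a ** prodH H (fun j => f (a + j)%nat) b.
Proof.
  induction b; simpl.
  - rewrite Nat.add_0_r, gmul1r. auto.
  - rewrite Nat.add_succ_r. simpl. rewrite IHb, gmulA. auto.
Qed.

Lemma prodH_mul (H : Group) f n k :
  prodH H f (n * k) = prodH H (fun i => prodH H (fun j => f (i * k + j)%nat) k) n.
Proof.
  induction n; simpl; auto.
  rewrite Nat.add_comm, prodH_add, IHn. auto.
Qed.

Lemma prodH_one (H : Group) f n : (forall i, (i < n)%nat -> f i = gone H) -> prodH H f n = gone H.
Proof. induction n; simpl; intros; auto. rewrite IHn by (intros; apply H0; lia). rewrite H0 by lia. apply gmul1l. Qed.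


Lemma sup01 (P : R -> Prop) :
  (forall a b, a <= b -> P b -> P a) ->
  (forall c, c < 0 -> P c) ->
  (forall c, 0 <= c <= 1 -> exists r, 0 < r /\ forall c', c - r < c' -> P c' -> P (c + r)) ->
  P 1.
Proof.
  intros Hmono Hneg Hstep.
  apply NNPP; intro N1.
  assert (Hlt : forall c, P c -> c < 1).
  { intros c Pc. destruct (Rlt_or_le c 1); auto. exfalso. apply N1. apply (Hmono 1 c); auto. }
  set (E := fun c => P c).
  assert (Hb : bound E) by (exists 1; intros c Ec; left; apply Hlt; auto).
  assert (He : exists x, E x) by (exists (-1); apply Hneg; lra).
  destruct (completeness E Hb He) as [m [Hub Hlub]].
  assert (Hm1 : m <= 1) by (apply Hlub; intros c Ec; left; apply Hlt; auto).
  destruct (Rlt_or_le m 0) as [Hm0|Hm0].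
  - destruct (Hstep 0) as [r [Hr Hs]]; [lra|].
    assert (P (0 + r)) by (apply (Hs (- r / 2)); [lra| apply Hneg; lra]).
    assert (0 + r <= m) by (apply Hub; auto). lra.
  - destruct (Hstep m) as [r [Hr Hs]]; [lra|].
    assert (exists c', m - r < c' /\ P c').
    { apply NNPP; intro Hn.
      assert (m <= m - r).
      { apply Hlub. intros c Ec. destruct (Rle_or_lt c (m - r)); auto.
        exfalso; apply Hn; exists c; auto. }
      lra. }
    destruct H as [c' [H1 H2]].
    assert (m + r <= m) by (apply Hub; apply (Hs c'); auto). lra.
Qed.

Lemma near_lemma c r c' rho s t :
  c - r < c' -> rho <= r -> s <= c + r -> t <= c + r -> Rabs (s - t) < rho ->
  ~ (s <= c' /\ t <= c') -> Rabs (s - c) < 2 * r /\ Rabs (t - c) < 2 * r.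
Proof.
  intros H H0 H1 H2 H3 H4. destruct (Rabs_def2 _ _ H3) as [H5 H6].
  assert (H7 : c' < s \/ c' < t).
  { destruct (Rle_or_lt s c'); destruct (Rle_or_lt t c'); auto. tauto. }
  split; apply Rabs_def1; destruct H7; lra.
Qed.

Section Metric.
Variables (X : Type) (d : X -> X -> R) (Hm : is_metric X d).

Lemma dsym x y : d x y = d y x.
Proof. destruct Hm as [_ [_ [H _]]]. auto. Qed.
Lemma dtri x y z : d x z <= d x y + d y z.
Proof. destruct Hm as [_ [_ [_ H]]]. auto. Qed.
Lemma dpos x y : 0 <= d x y.
Proof. destruct Hm as [H _]. auto. Qed.
Lemma dself x : d x x = 0.
Proof. destruct Hm as [_ [H _]]. apply H; auto. Qed.

Lemma dtri2 x y z e : d x z < e / 2 -> d y z < e / 2 -> d x y < e.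
Proof. intros. pose proof (dtri x z y). rewrite (dsym z y) in H1. lra. Qed.

Lemma heine1 (g : R -> X) : cont_path d g -> forall eps, 0 < eps ->
  exists rho, 0 < rho /\ forall s t, in01 s -> in01 t -> Rabs (s - t) < rho -> d (g s) (g t) < eps.
Proof.
  intros Hc eps He.
  set (P := fun c => exists rho, 0 < rho /\ forall s t, in01 s -> in01 t -> s <= c -> t <= c ->
              Rabs (s - t) < rho -> d (g s) (g t) < eps).
  assert (P 1).
  { apply sup01.
    - intros a b Hab [rho [Hr Hp]]. exists rho; split; auto. intros; apply Hp; auto; lra.
    - intros c Hc0. exists 1; split; [lra|]. intros s t Hs. destruct Hs; lra.
    - intros c Hc01.
      destruct (Hc c Hc01 (eps / 2)) as [dc [Hdc Hcc]]; [lra|].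
      exists (dc / 4); split; [lra|].
      intros c' Hc' [rho' [Hr' Hp']].
      exists (Rmin rho' (dc / 4)); split; [apply Rmin_pos; lra|].
      intros s t Hs Ht Hsc Htc Hst.
      destruct (classic (s <= c' /\ t <= c')) as [[? ?]|Hn].
      + apply Hp'; auto. eapply Rlt_le_trans; [apply Hst| apply Rmin_l].
      + destruct (near_lemma c (dc/4) c' (Rmin rho' (dc / 4)) s t) as [A B]; auto.
        apply Rmin_r.
        apply dtri2 with (g c); apply Hcc; auto; lra. }
  destruct H as [rho [Hr Hp]]. exists rho; split; auto.
  intros s t Hs Ht; apply Hp; auto; [destruct Hs|destruct Ht]; lra.
Qed.

Lemma heine2 (K : R -> R -> X) : cont_square d K -> forall eps, 0 < eps ->
  exists rho, 0 < rho /\ forall s t s' t', in01 s -> in01 t -> in01 s' -> in01 t' ->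
    Rabs (s - s') < rho -> Rabs (t - t') < rho -> d (K s t) (K s' t') < eps.
Proof.
  intros Hc eps He.
  assert (HA : forall s0, in01 s0 -> exists rho, 0 < rho /\ forall s t s' t', in01 s -> in01 t -> in01 s' -> in01 t' ->
    Rabs (s - s0) < rho -> Rabs (s' - s0) < rho -> Rabs (t - t') < rho -> d (K s t) (K s' t') < eps).
  { intros s0 Hs0.
    set (P := fun c => exists rho, 0 < rho /\ forall s t s' t', in01 s -> in01 t -> in01 s' -> in01 t' ->
      Rabs (s - s0) < rho -> Rabs (s' - s0) < rho -> t <= c -> t' <= c -> Rabs (t - t') < rho -> d (K s t) (K s' t') < eps).
    assert (P 1).
    { apply sup01.
      - intros a b Hab [rho [Hr Hp]]. exists rho; split; auto. intros; apply Hp; auto; lra.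
      - intros c Hc0. exists 1; split; [lra|]. intros s t s' t' _ Ht. destruct Ht; lra.
      - intros c Hc01.
        destruct (Hc s0 c Hs0 Hc01 (eps / 2)) as [dc [Hdc Hcc]]; [lra|].
        exists (dc / 4); split; [lra|].
        intros c' Hc' [rho' [Hr' Hp']].
        exists (Rmin rho' (dc / 4)); split; [apply Rmin_pos; lra|].
        intros s t s' t' Hs Ht Hs' Ht' Hss Hss' Htc Htc' Htt.
        pose proof (Rmin_l rho' (dc/4)). pose proof (Rmin_r rho' (dc/4)).
        destruct (classic (t <= c' /\ t' <= c')) as [[? ?]|Hn].
        + apply Hp'; auto; lra.
        + destruct (near_lemma c (dc/4) c' (Rmin rho' (dc / 4)) t t') as [A B]; auto.
          apply dtri2 with (K s0 c); apply Hcc; auto; lra. }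
    destruct H as [rho [Hr Hp]]. exists rho; split; auto.
    intros s t s' t' Hs Ht Hs' Ht'; intros; apply Hp; auto; [destruct Ht|destruct Ht']; lra. }
  set (P := fun c => exists rho, 0 < rho /\ forall s t s' t', in01 s -> in01 t -> in01 s' -> in01 t' ->
      s <= c -> s' <= c -> Rabs (s - s') < rho -> Rabs (t - t') < rho -> d (K s t) (K s' t') < eps).
  assert (P 1).
  { apply sup01.
    - intros a b Hab [rho [Hr Hp]]. exists rho; split; auto. intros; apply Hp; auto; lra.
    - intros c Hc0. exists 1; split; [lra|]. intros s t s' t' Hs. destruct Hs; lra.
    - intros c Hc01.
      destruct (HA c Hc01) as [dc [Hdc Hcc]].
      exists (dc / 4); split; [lra|].
      intros c' Hc' [rho' [Hr' Hp']].
      exists (Rmin rho' (dc / 4)); split; [apply Rmin_pos; lra|].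
      intros s t s' t' Hs Ht Hs' Ht' Hsc Hsc' Hss Htt.
      pose proof (Rmin_l rho' (dc/4)). pose proof (Rmin_r rho' (dc/4)).
      destruct (classic (s <= c' /\ s' <= c')) as [[? ?]|Hn].
      + apply Hp'; auto; lra.
      + destruct (near_lemma c (dc/4) c' (Rmin rho' (dc / 4)) s s') as [A B]; auto.
        apply Hcc; auto; lra. }
  destruct H as [rho [Hr Hp]]. exists rho; split; auto.
  intros s t s' t' Hs Ht Hs' Ht'; intros; apply Hp; auto; [destruct Hs|destruct Hs']; lra.
Qed.

End Metric.
Section Ext.
Variables (G : Group) (X : Type) (d : X -> X -> R) (act : G -> X -> X) (D : R) (x0 : X) (delta : R).
Hypotheses (Hmet : is_metric X d) (Hlen : length_space X d) (Hsc : simply_connected X d) (Hact : isometric_action G X d act) (HD : 0 < D) (Hdl : 0 < delta)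
  (Hdiam : quotient_diam_le G X d act D)
  (Hdel : forall a, d x0 (act a x0) < 2*D + 3*delta -> d x0 (act a x0) <= 2*D).

Definition SS a := d x0 (act a x0) <= 2 * D.
Definition near y a := d y (act a x0) < D + delta.

Lemma act_one x : act (gone G) x = x.
Proof. destruct Hact as [H _]; auto. Qed.
Lemma act_mul a b x : act (a ** b) x = act a (act b x).
Proof. destruct Hact as [_ [H _]]; auto. Qed.
Lemma act_iso a x y : d (act a x) (act a y) = d x y.
Proof. destruct Hact as [_ [_ H]]; auto. Qed.

Lemma dact a b : d (act a x0) (act b x0) = d x0 (act (ginv G a ** b) x0).
Proof.
  rewrite <- (act_iso a x0). rewrite <- act_mul, gmulA, gmulVr, gmul1l. auto.
Qed.

Lemma near_S y y' a b : near y a -> near y' b -> d y y' < delta -> SS (ginv G a ** b).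
Proof.
  unfold near, SS; intros. apply Hdel. rewrite <- dact.
  pose proof (dtri X d Hmet (act a x0) y (act b x0)).
  pose proof (dtri X d Hmet y y' (act b x0)). rewrite (dsym X d Hmet (act a x0) y) in H2. lra.
Qed.

Lemma SS_one : SS (gone G).
Proof. unfold SS. rewrite act_one, (dself X d Hmet). lra. Qed.

Lemma SS_inv a : SS a -> SS (ginv G a).
Proof.
  unfold SS. intro. rewrite <- (act_iso a), <- act_mul, gmulVr, act_one, dsym; auto.
Qed.

Lemma near_refl a : near (act a x0) a.
Proof. unfold near. rewrite (dself X d Hmet). lra. Qed.

Lemma near_exists y : exists a, near y a.
Proof.
  destruct (Hdiam y x0 delta Hdl) as [a Ha]. exists a. exact Ha.
Qed.

Variables (H : Group) (phi : G -> H).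
Hypothesis Htab : forall s t, SS s -> SS t -> SS (s ** t) -> phi (s ** t) = phi s ** phi t.

Lemma phi_one : phi (gone G) = gone H.
Proof. apply gidem. rewrite <- Htab; try apply SS_one; rewrite gmul1l; auto; apply SS_one. Qed.

Lemma key p q r : SS (ginv G p ** q) -> SS (ginv G q ** r) -> SS (ginv G p ** r) ->
  phi (ginv G p ** r) = phi (ginv G p ** q) ** phi (ginv G q ** r).
Proof. intros. rewrite <- Htab; auto; rewrite gtel; auto. Qed.

Lemma phi_inv s : SS s -> phi (ginv G s) = ginv H (phi s).
Proof.
  intro Hs. apply ginv_unique. rewrite <- Htab; auto; try apply SS_inv; auto; rewrite gmulVr.
  apply phi_one. apply SS_one.
Qed.

Definition cprod (c : nat -> G) n := prodH H (fun i => phi (ginv G (c i) ** c (S i))) n.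

Lemma ladder (y y' : nat -> X) (a b : nat -> G) m :
  (forall i, (i <= m)%nat -> near (y i) (a i) /\ near (y' i) (b i)) ->
  (forall i, (i < m)%nat -> d (y i) (y (S i)) < delta /\ d (y' i) (y' (S i)) < delta /\ d (y i) (y' (S i)) < delta) ->
  (forall i, (i <= m)%nat -> d (y i) (y' i) < delta) ->
  cprod a m ** phi (ginv G (a m) ** b m) = phi (ginv G (a 0%nat) ** b 0%nat) ** cprod b m.
Proof.
  intros Hn Hc Hd. induction m.
  - simpl. rewrite gmul1l, gmul1r. auto.
  - unfold cprod in *. simpl.
    rewrite gmulA. rewrite <- IHm by (intros; try apply Hn; try apply Hc; try apply Hd; lia).
    destruct (Hn m) as [A1 B1]; [lia|]. destruct (Hn (S m)) as [A2 B2]; [lia|].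
    destruct (Hc m) as [C1 [C2 C3]]; [lia|].
    pose proof (Hd m ltac:(lia)). pose proof (Hd (S m) ltac:(lia)).
    rewrite <- !gmulA. f_equal.
    rewrite <- key, <- key; auto; eapply near_S; eauto.
Qed.

Lemma telescope (e : nat -> G) m :
  (forall u v, (u <= m)%nat -> (v <= m)%nat -> SS (ginv G (e u) ** e v)) ->
  cprod e m = phi (ginv G (e 0%nat) ** e m).
Proof.
  intro Hs. induction m.
  - simpl. rewrite gmulVl, phi_one. auto.
  - unfold cprod in *; simpl. rewrite IHm by (intros; apply Hs; lia).
    rewrite <- key; auto; apply Hs; lia.
Qed.


Fixpoint pidx (m : nat) (u : R) : nat :=
  match m with O => O | S m' => if Rle_dec (INR (S m')) u then S m' else pidx m' u end.

Lemma nat_lt_INR a b : (a < b)%nat -> INR a + 1 <= INR b.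
Proof. intro. rewrite <- S_INR. apply le_INR. lia. Qed.

Lemma pidx_spec m u : 0 <= u -> (pidx m u <= m)%nat /\ INR (pidx m u) <= u /\ (u < INR (pidx m u) + 1 \/ pidx m u = m).
Proof.
  intro Hu. induction m; cbn [pidx].
  - split; [lia|split]; [simpl; lra|auto].
  - destruct (Rle_dec (INR (S m)) u).
    + split; [lia|split; auto].
    + destruct IHm as [A [B C]]. split; [lia|split; auto]. left.
      destruct C as [C|C]; auto. rewrite C. rewrite S_INR in n. lra.
Qed.

Lemma pidx_eq m u i : 0 <= u -> (i <= m)%nat -> INR i <= u -> (u < INR i + 1 \/ i = m) -> pidx m u = i.
Proof.
  intros Hu Him Hi1 Hi2. destruct (pidx_spec m u Hu) as [A [B C]].
  set (p := pidx m u) in *.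
  destruct (lt_eq_lt_dec p i) as [[Hlt|Heq]|Hlt]; auto.
  - destruct C as [C|C]; [|lia]. pose proof (nat_lt_INR _ _ Hlt). lra.
  - destruct Hi2 as [C'|C']; [|lia]. pose proof (nat_lt_INR _ _ Hlt). lra.
Qed.

Lemma fin_min (P : nat -> R -> Prop) n :
  (forall i r r', P i r -> 0 < r' <= r -> P i r') ->
  (forall i, (i < n)%nat -> exists r, 0 < r /\ P i r) ->
  exists r, 0 < r /\ forall i, (i < n)%nat -> P i r.
Proof.
  intros Hm. induction n; intros Hp.
  - exists 1; split; [lra|]. intros; lia.
  - destruct IHn as [r1 [H1 H1']]. { intros; apply Hp; lia. }
    destruct (Hp n) as [r2 [H2 H2']]; [lia|].
    exists (Rmin r1 r2); split; [apply Rmin_pos; auto|].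
    intros i Hi. assert (0 < Rmin r1 r2) by (apply Rmin_pos; auto).
    destruct (Nat.eq_dec i n).
    + subst. apply (Hm _ r2); auto. split; auto. apply Rmin_r.
    + apply (Hm _ r1); [apply H1'; lia|]. split; auto; apply Rmin_l.
Qed.

Lemma small_step rho : 0 < rho -> exists K : nat, (1 <= K)%nat /\ 1 / INR K < rho.
Proof.
  intro Hr. destruct (INR_unbounded (Rmax 1 (1 / rho))) as [K HK].
  pose proof (Rmax_l 1 (1/rho)). pose proof (Rmax_r 1 (1/rho)).
  assert (1 <= K)%nat.
  { destruct K; [simpl in HK; lra| lia]. }
  exists K; split; auto.
  assert (0 < INR K) by lra.
  apply (Rmult_lt_reg_r (INR K)); auto. unfold Rdiv. rewrite Rmult_1_l, Rinv_l by lra.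
  apply (Rmult_lt_reg_l (/ rho)). apply Rinv_0_lt_compat; auto.
  rewrite <- Rmult_assoc, Rinv_l, Rmult_1_l, Rmult_1_r by lra. unfold Rdiv in H0. lra.
Qed.

Lemma divmod_eq i u K : (u < K)%nat -> ((i * K + u) / K = i /\ (i * K + u) mod K = u)%nat.
Proof.
  intro. split.
  - symmetry. apply (Nat.div_unique _ _ _ u); auto. lia.
  - symmetry. apply (Nat.mod_unique _ _ i); auto. lia.
Qed.

Lemma in01_frac k M : (0 < M)%nat -> (k <= M)%nat -> in01 (INR k / INR M).
Proof.
  intros. split.
  - apply Rle_mult_inv_pos; [apply pos_INR| apply lt_0_INR; auto].
  - apply (Rmult_le_reg_r (INR M)); [apply lt_0_INR; auto|].
    unfold Rdiv. rewrite Rmult_assoc, Rinv_l, Rmult_1_r, Rmult_1_l; [apply le_INR; auto|].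
    apply not_0_INR; lia.
Qed.

Lemma frac_close k k' M rho : (0 < M)%nat -> 1 / INR M < rho -> (k' = k \/ k' = S k) ->
  Rabs (INR k / INR M - INR k' / INR M) < rho.
Proof.
  intros HM Hr Hk. assert (0 < INR M) by (apply lt_0_INR; auto).
  assert (0 < 1 / INR M) by (apply Rdiv_lt_0_compat; lra).
  destruct Hk; subst.
  - unfold Rminus. rewrite Rplus_opp_r, Rabs_R0. lra.
  - rewrite S_INR. replace (INR k / INR M - (INR k + 1) / INR M) with (- (1 / INR M)) by (field; lra).
    rewrite Rabs_Ropp, Rabs_right; lra.
Qed.

Definition lpath (n : nat) (seg : nat -> R -> X) (t : R) : X :=
  seg (pidx (n - 1) (INR n * t)) (INR n * t - INR (pidx (n - 1) (INR n * t))).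

Lemma INR_pred n : (1 <= n)%nat -> INR (n - 1) + 1 = INR n.
Proof. intro. rewrite <- S_INR. f_equal. lia. Qed.

Lemma lpath_unif n seg : (1 <= n)%nat -> (forall i, (i < n)%nat -> cont_path d (seg i)) ->
  (forall i, (S i < n)%nat -> seg i 1 = seg (S i) 0) ->
  forall eps, 0 < eps -> exists rho, 0 < rho /\ forall t t', in01 t -> in01 t' -> Rabs (t - t') < rho ->
    d (lpath n seg t) (lpath n seg t') < eps.
Proof.
  intros Hn Hc Hl eps He.
  destruct (fin_min (fun i r => forall s t, in01 s -> in01 t -> Rabs (s - t) < r -> d (seg i s) (seg i t) < eps / 2) n)
    as [rs [Hrs Hrs']].
  { intros i r r' Hp Hr s t Hs Ht Hst. apply Hp; auto. lra. }
  { intros i Hi. apply heine1; auto. lra. }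
  set (r0 := Rmin rs 1).
  assert (Hr0 : 0 < r0) by (apply Rmin_pos; lra).
  assert (Hr0s : r0 <= rs) by apply Rmin_l. assert (Hr01 : r0 <= 1) by apply Rmin_r.
  assert (HnR : 0 < INR n) by (apply lt_0_INR; lia).
  pose proof (INR_pred n Hn) as Hnp.
  assert (Aux : forall t t', in01 t -> in01 t' -> t <= t' -> t' - t < r0 / INR n ->
                 d (lpath n seg t) (lpath n seg t') < eps).
  { intros t t' Ht Ht' Htt Hd. unfold lpath.
    destruct Ht as [Ht0 Ht1]. destruct Ht' as [Ht0' Ht1'].
    set (u := INR n * t). set (u' := INR n * t').
    assert (Hu0 : 0 <= u) by (unfold u; nra).
    assert (Huu : u <= u') by (unfold u, u'; nra).
    assert (Hu1 : u' <= INR n) by (unfold u'; nra).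
    assert (Hdu : u' - u < r0).
    { unfold u, u'. replace (INR n * t' - INR n * t) with (INR n * (t' - t)) by ring.
      apply (Rmult_lt_reg_l (/ INR n)). apply Rinv_0_lt_compat; auto.
      rewrite <- Rmult_assoc, Rinv_l, Rmult_1_l by lra. unfold Rdiv in Hd. lra. }
    destruct (pidx_spec (n - 1) u Hu0) as [A1 [B1 C1]].
    destruct (pidx_spec (n - 1) u' ltac:(lra)) as [A2 [B2 C2]].
    set (i := pidx (n - 1) u) in *. set (i' := pidx (n - 1) u') in *.
    assert (Hii : (i <= i')%nat).
    { destruct (le_lt_dec i i') as [?|Hlt]; auto. exfalso.
      destruct C2 as [C2|C2]; [|lia]. pose proof (nat_lt_INR _ _ Hlt). lra. }
    assert (Hii' : (i' <= S i)%nat).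
    { destruct (le_lt_dec i' (S i)) as [?|Hlt]; auto. exfalso.
      destruct C1 as [C1|C1]; [|lia]. pose proof (nat_lt_INR _ _ Hlt) as HH. rewrite S_INR in HH. lra. }
    destruct (Nat.eq_dec i' i) as [Heq|Hne].
    - rewrite Heq. apply (Rlt_trans _ (eps / 2)); [|lra].
      apply Hrs'; [lia| | |].
      + split; [lra|]. destruct C1 as [C1|C1]; [lra|]. rewrite C1; lra.
      + rewrite <- Heq. split; [lra|]. destruct C2 as [C2|C2]; [lra|]. rewrite C2; lra.
      + rewrite Rabs_left1; lra.
    - assert (Hi' : i' = S i) by lia.
      assert (Hin : (S i < n)%nat) by lia.
      destruct C1 as [C1|C1]; [|lia].
      rewrite Hi', S_INR in B2. rewrite Hi' in C2.
      pose proof (dtri X d Hmet (seg i (u - INR i)) (seg i 1) (seg i' (u' - INR i'))).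
      assert (d (seg i (u - INR i)) (seg i 1) < eps / 2).
      { apply Hrs'; [lia| split; lra | split; lra |]. rewrite Rabs_left1; lra. }
      assert (d (seg i 1) (seg i' (u' - INR i')) < eps / 2).
      { rewrite Hl, Hi' by auto. rewrite dsym by auto.
        assert (HS : u' - INR (S i) <= 1).
        { rewrite S_INR. destruct C2 as [C2|C2]; [rewrite S_INR in C2; lra|].
          rewrite <- Hnp, <- C2, S_INR in Hu1. lra. }
        rewrite S_INR in HS |- *.
        apply Hrs'; [lia| split; lra | split; lra|].
        rewrite Rminus_0_r, Rabs_right; lra. }
      lra. }
  exists (r0 / INR n); split; [apply Rdiv_lt_0_compat; auto|].
  intros t t' Ht Ht' Hd. destruct (Rle_or_lt t t').
  - apply Aux; auto. rewrite Rabs_left1 in Hd; lra.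
  - rewrite dsym by auto. apply Aux; auto; [lra|]. rewrite Rabs_right in Hd; lra.
Qed.

Lemma lpath_at n seg i p t : (1 <= n)%nat -> (i <= n - 1)%nat -> 0 <= p -> (p < 1 \/ i = (n - 1)%nat) ->
  INR n * t = INR i + p -> lpath n seg t = seg i p.
Proof.
  intros Hn Hi Hp Hp1 Ht. unfold lpath. rewrite Ht.
  pose proof (pos_INR i).
  rewrite (pidx_eq (n - 1) (INR i + p) i); try lra; auto.
  - f_equal. ring.
  - destruct Hp1; [left; lra| right; auto].
Qed.

Lemma length_mid (g : R -> X) L t : length_le d g L -> in01 t -> d (g 0) (g t) + d (g t) (g 1) <= L.
Proof.
  intros Hl [Ht0 Ht1].
  set (tf := fun k : nat => match k with O => 0 | 1%nat => t | _ => 1 end).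
  specialize (Hl 2%nat tf eq_refl eq_refl).
  simpl in Hl. 
  assert (Rsum_upto (fun i => d (g (tf i)) (g (tf (S i)))) 2 = d (g 0) (g t) + d (g t) (g 1)).
  { simpl. ring. }
  rewrite <- H0. apply Hl. intros i Hi. destruct i as [|[|i]]; simpl; lra || lia.
Qed.

Lemma SS_pair p q : SS (ginv G p ** q) -> forall u v, (u = p \/ u = q) -> (v = p \/ v = q) -> SS (ginv G u ** v).
Proof.
  intros Hpq u v Hu Hv.
  destruct Hu as [->| ->], Hv as [->| ->]; try (rewrite gmulVl; apply SS_one); auto.
  replace (ginv G q ** p) with (ginv G (ginv G p ** q)); [apply SS_inv; auto|].
  rewrite ginv_mul, ginv_inv. auto.
Qed.

Lemma CL (c : nat -> G) n : (forall i, (i < n)%nat -> SS (ginv G (c i) ** c (S i))) ->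
  c 0%nat = gone G -> c n = gone G -> cprod c n = gone H.
Proof.
  intros Hcay Hc0 Hcn.
  destruct (Nat.eq_dec n 0) as [->|Hn0]; [reflexivity|].
  assert (Hn : (1 <= n)%nat) by lia.
  assert (Hex : forall i, exists g, cont_path d g /\ g 0 = act (c i) x0 /\ g 1 = act (c (S i)) x0 /\
     length_le d g (d (act (c i) x0) (act (c (S i)) x0) + delta / 2)) by (intro; apply Hlen; lra).
  set (seg := fun i => proj1_sig (constructive_indefinite_description _ (Hex i))).
  assert (Hseg : forall i, cont_path d (seg i) /\ seg i 0 = act (c i) x0 /\ seg i 1 = act (c (S i)) x0 /\
     length_le d (seg i) (d (act (c i) x0) (act (c (S i)) x0) + delta / 2))
    by (intro; exact (proj2_sig (constructive_indefinite_description _ (Hex i)))).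
  clearbody seg.
  assert (Hnseg : forall i, (i < n)%nat -> forall t, in01 t -> near (seg i t) (c i) \/ near (seg i t) (c (S i))).
  { intros i Hi t Ht. destruct (Hseg i) as [_ [S0 [S1 SL]]].
    pose proof (length_mid _ _ _ SL Ht) as HL. rewrite S0, S1 in HL.
    rewrite dact in HL. pose proof (Hcay i Hi) as HS. unfold SS in HS.
    unfold near. rewrite (dsym X d Hmet (act (c i) x0)) in HL.
    destruct (Rlt_or_le (d (seg i t) (act (c i) x0)) (D + delta)); [left; auto| right; lra]. }
  set (lp := lpath n seg).
  assert (Hlpu := lpath_unif n seg Hn (fun i _ => proj1 (Hseg i))
     (fun i _ => eq_trans (proj1 (proj2 (proj2 (Hseg i)))) (eq_sym (proj1 (proj2 (Hseg (S i))))))).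
  assert (Hlpc : cont_path d lp).
  { intros t Ht eps He. destruct (Hlpu eps He) as [r [Hr Hr']]. exists r; split; auto. }
  assert (Hlp0 : lp 0 = x0).
  { unfold lp. rewrite (lpath_at n seg 0 0 0); try lia; try lra; auto.
    - rewrite (proj1 (proj2 (Hseg 0%nat))), Hc0, act_one. auto.
    - simpl; ring. }
  assert (Hlp1 : lp 1 = x0).
  { unfold lp. rewrite (lpath_at n seg (n - 1) 1 1); try lia; try lra; auto.
    - rewrite (proj1 (proj2 (proj2 (Hseg (n - 1)%nat)))). replace (S (n - 1)) with n by lia.
      rewrite Hcn, act_one. auto.
    - rewrite INR_pred; auto; ring. }
  destruct Hsc as [_ Hloop].
  destruct (Hloop lp Hlpc (eq_trans Hlp0 (eq_sym Hlp1))) as [K [HKc [HK0 [HK1 HKe]]]].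
  rewrite Hlp0 in HK1, HKe.
  destruct (heine2 X d Hmet K HKc delta Hdl) as [rho [Hrho Hrho']].
  destruct (small_step rho Hrho) as [K0 [HK0pos HK0r]].
  set (M := (n * K0)%nat).
  assert (HM : (0 < M)%nat) by (unfold M; lia).
  assert (HMr : 1 / INR M < rho).
  { eapply Rle_lt_trans; [|apply HK0r]. unfold Rdiv. rewrite !Rmult_1_l.
    apply Rinv_le_contravar; [apply lt_0_INR; lia| apply le_INR; unfold M; nia]. }
  set (Y := fun j k : nat => K (INR j / INR M) (INR k / INR M)).
  assert (Hclose : forall j j' k k', (j <= M)%nat -> (j' <= M)%nat -> (k <= M)%nat -> (k' <= M)%nat ->
     (j' = j \/ j' = S j) -> (k' = k \/ k' = S k) -> d (Y j k) (Y j' k') < delta).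
  { intros. unfold Y. apply Hrho'; try apply in01_frac; auto; apply frac_close; auto. }
  assert (Hlab : forall y, {a | near y a}) by (intro y; apply constructive_indefinite_description; apply near_exists).
  set (lab' := fun y => if excluded_middle_informative (y = x0) then gone G else proj1_sig (Hlab y)).
  assert (Hlab' : forall y, near y (lab' y)).
  { intro y. unfold lab'. destruct (excluded_middle_informative (y = x0)) as [->|].
    - unfold near. rewrite act_one, (dself X d Hmet). lra.
    - exact (proj2_sig (Hlab y)). }
  assert (Hlab0 : lab' x0 = gone G).
  { unfold lab'. destruct (excluded_middle_informative (x0 = x0)); auto. congruence. }
  clearbody lab'.
  set (b := fun k : nat => if excluded_middle_informative (near (seg (k / K0)%nat (INR (k mod K0)%nat / INR K0)) (c (k / K0)%nat))
                     then c (k / K0)%nat else c (S (k / K0)%nat)).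
  assert (HK0R : 0 < INR K0) by (apply lt_0_INR; lia).
  assert (Hb_i : forall i u, (u < K0)%nat -> b (i * K0 + u)%nat = c i \/ b (i * K0 + u)%nat = c (S i)).
  { intros i u Hu. unfold b. destruct (divmod_eq i u K0 Hu) as [-> ->].
    destruct (excluded_middle_informative _); auto. }
  assert (Hb_0 : forall i, b (i * K0)%nat = c i).
  { intro i. unfold b. replace (i * K0)%nat with (i * K0 + 0)%nat by lia.
    destruct (divmod_eq i 0 K0 ltac:(lia)) as [-> ->].
    destruct (excluded_middle_informative _) as [|Hn']; auto. exfalso; apply Hn'.
    simpl INR. unfold Rdiv. rewrite Rmult_0_l. rewrite (proj1 (proj2 (Hseg i))). apply near_refl. }
  assert (HY0 : forall k, (k <= M)%nat -> Y 0%nat k = lp (INR k / INR M)).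
  { intros k Hk. unfold Y. simpl INR. unfold Rdiv at 1. rewrite Rmult_0_l. apply HK0. apply in01_frac; auto. }
  assert (Hnear0 : forall k, (k <= M)%nat -> near (Y 0%nat k) (b k)).
  { intros k Hk. rewrite HY0 by auto.
    destruct (Nat.eq_dec k M) as [->|HkM].
    - unfold M at 3. rewrite Hb_0. rewrite Rdiv_diag by (apply not_0_INR; lia). rewrite Hlp1, Hcn.
      pattern x0 at 1. rewrite <- (act_one x0). apply near_refl.
    - pose proof (Nat.div_mod_eq k K0) as Hdm.
      assert (Hu : (k mod K0 < K0)%nat) by (apply Nat.mod_upper_bound; lia).
      assert (Hi : (k / K0 < n)%nat) by (apply Nat.Div0.div_lt_upper_bound; unfold M in *; lia).
      unfold lp. rewrite (lpath_at n seg (k / K0) (INR (k mod K0) / INR K0)); try lia.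
      + unfold b. destruct (excluded_middle_informative _); auto.
        destruct (Hnseg (k / K0)%nat Hi (INR (k mod K0) / INR K0)); auto; try tauto.
        apply in01_frac; lia.
      + apply Rle_mult_inv_pos; [apply pos_INR|auto].
      + left. apply (Rmult_lt_reg_r (INR K0)); auto. unfold Rdiv. rewrite Rmult_assoc, Rinv_l, Rmult_1_r, Rmult_1_l by (apply not_0_INR; lia).
        apply lt_INR; auto.
      + unfold M. rewrite Hdm at 1. rewrite plus_INR, !mult_INR. field. split; apply not_0_INR; lia. }
  set (L := fun j k => match j with O => b k | S _ => lab' (Y j k) end).
  assert (HnearL : forall j k, (k <= M)%nat -> near (Y j k) (L j k)).
  { intros [|j] k Hk; simpl; auto. }
  assert (Hends : forall j, (j <= M)%nat -> L j 0%nat = gone G /\ L j M = gone G).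
  { intros [|j] Hj; simpl.
    - split.
      + replace 0%nat with (0 * K0)%nat at 1 by lia. rewrite Hb_0. auto.
      + unfold M at 1. rewrite Hb_0. auto.
    - unfold Y. simpl INR at 2. unfold Rdiv at 2. rewrite Rmult_0_l.
      rewrite Rdiv_diag by (apply not_0_INR; lia).
      destruct (HKe (INR (S j) / INR M)) as [E1 E2]; [apply in01_frac; auto|].
      rewrite E1, E2, Hlab0. auto. }
  assert (Hstep : forall j, (j < M)%nat -> cprod (L j) M = cprod (L (S j)) M).
  { intros j Hj.
    pose proof (ladder (Y j) (Y (S j)) (L j) (L (S j)) M) as Hlad.
    destruct (Hends j ltac:(lia)) as [E1 E2]. destruct (Hends (S j) ltac:(lia)) as [E3 E4].
    rewrite E1, E2, E3, E4, ginv_one, gmul1l, phi_one, gmul1r, gmul1l in Hlad.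
    apply Hlad.
    - intros; split; apply HnearL; auto.
    - intros i Hi. repeat split; apply Hclose; lia.
    - intros i Hi. apply Hclose; lia. }
  assert (HrowM : cprod (L M) M = gone H).
  { unfold cprod. apply prodH_one. intros k Hk.
    destruct M as [|M'] eqn:EM; [lia|]. simpl L. unfold Y. rewrite <- EM.
    rewrite Rdiv_diag by (apply not_0_INR; lia).
    rewrite !HK1 by (apply in01_frac; lia). rewrite Hlab0, gmulVl. apply phi_one. }
  assert (Hall : forall k, (k <= M)%nat -> cprod (L (M - k)%nat) M = gone H).
  { induction k; intro Hk.
    - rewrite Nat.sub_0_r. auto.
    - rewrite Hstep by lia. replace (S (M - S k)) with (M - k)%nat by lia. apply IHk; lia. }
  pose proof (Hall M (le_n M)) as Hb. rewrite Nat.sub_diag in Hb.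
  change (cprod b M = gone H) in Hb.
  rewrite <- Hb. unfold cprod at 2. unfold M. rewrite prodH_mul.
  unfold cprod. apply prodH_ext. intros i Hi.
  set (e := fun u => b (i * K0 + u)%nat).
  transitivity (cprod e K0).
  - rewrite telescope.
    + unfold e. rewrite Nat.add_0_r, Hb_0. replace (i * K0 + K0)%nat with (S i * K0)%nat by lia.
      rewrite Hb_0. auto.
    + intros u v Hu Hv. apply (SS_pair (c i) (c (S i))); [apply Hcay; auto| |];
      unfold e; [destruct (Nat.eq_dec u K0) as [->|]|destruct (Nat.eq_dec v K0) as [->|]];
      try (replace (i * K0 + K0)%nat with (S i * K0)%nat by lia; rewrite Hb_0; auto);
      apply Hb_i; lia.
  - unfold cprod, e. apply prodH_ext. intros u Hu. rewrite Nat.add_succ_r. auto.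
Qed.

Lemma gen (g0 : G) : exists (c : nat -> G) n, (forall i, (i < n)%nat -> SS (ginv G (c i) ** c (S i))) /\
  c 0%nat = gone G /\ c n = g0.
Proof.
  destruct Hsc as [[_ Hpc] _].
  destruct (Hpc x0 (act g0 x0)) as [g [Hg [Hg0 Hg1]]].
  destruct (heine1 X d Hmet g Hg delta Hdl) as [rho [Hrho Hrho']].
  destruct (small_step rho Hrho) as [n [Hn Hnr]].
  assert (Hlab : forall y, {a | near y a}) by (intro y; apply constructive_indefinite_description; apply near_exists).
  set (c := fun k => if Nat.eq_dec k 0 then gone G else if Nat.eq_dec k n then g0 else proj1_sig (Hlab (g (INR k / INR n)))).
  assert (Hnear : forall k, (k <= n)%nat -> near (g (INR k / INR n)) (c k)).
  { intros k Hk. unfold c. destruct (Nat.eq_dec k 0) as [->|].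
    - simpl INR. unfold Rdiv. rewrite Rmult_0_l, Hg0. pattern x0 at 1. rewrite <- (act_one x0). apply near_refl.
    - destruct (Nat.eq_dec k n) as [->|].
      + rewrite Rdiv_diag by (apply not_0_INR; lia). rewrite Hg1. apply near_refl.
      + exact (proj2_sig (Hlab _)). }
  exists c, n. split; [|split].
  - intros i Hi. apply (near_S (g (INR i / INR n)) (g (INR (S i) / INR n))); try apply Hnear; try lia.
    apply Hrho'; try apply in01_frac; try lia. apply frac_close; auto; lia.
  - unfold c. destruct (Nat.eq_dec 0 0); auto. congruence.
  - unfold c. destruct (Nat.eq_dec n 0); [lia|]. destruct (Nat.eq_dec n n); auto. congruence.
Qed.

Lemma hom_unique (H' : Group) (f g : G -> H') : ishom G H' f -> ishom G H' g ->
  (forall s, SS s -> f s = g s) -> forall a, f a = g a.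
Proof.
  intros Hf Hg Hs a. destruct (gen a) as [c [n [Hc [Hc0 Hcn]]]].
  assert (forall k, (k <= n)%nat -> f (c k) = g (c k)).
  { induction k; intro Hk.
    - rewrite Hc0, !hom_one; auto.
    - replace (c (S k)) with (c k ** (ginv G (c k) ** c (S k))).
      + rewrite Hf, Hg, IHk, Hs by (try apply Hc; lia). auto.
      + rewrite gmulA, gmulVr, gmul1l. auto. }
  rewrite <- Hcn. apply H0. lia.
Qed.

Definition cay (c : nat -> G) n := forall i, (i < n)%nat -> SS (ginv G (c i) ** c (S i)).

Lemma prodH_cons (H' : Group) f m : prodH H' f (S m) = f 0%nat ** prodH H' (fun j => f (S j)) m.
Proof. replace (S m) with (1 + m)%nat by lia. rewrite prodH_add. simpl. rewrite gmul1l. auto. Qed.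

Lemma prodH_rev (H' : Group) f m : prodH H' (fun j => ginv H' (f (m - 1 - j)%nat)) m = ginv H' (prodH H' f m).
Proof.
  revert f. induction m; intro f.
  - simpl. rewrite ginv_one. auto.
  - rewrite prodH_cons. cbn [prodH]. rewrite ginv_mul. f_equal.
    + f_equal. f_equal. lia.
    + rewrite <- (IHm f). apply prodH_ext. intros i Hi. f_equal. f_equal. lia.
Qed.

Lemma wd (c c' : nat -> G) n m : cay c n -> cay c' m -> c 0%nat = gone G -> c' 0%nat = gone G ->
  c n = c' m -> cprod c n = cprod c' m.
Proof.
  intros Hc Hc' H0 H0' Hnm.
  set (e := fun i => if le_lt_dec i n then c i else c' (n + m - i)%nat).
  assert (He : cay e (n + m)).
  { intros i Hi. unfold e. destruct (le_lt_dec i n); destruct (le_lt_dec (S i) n).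
    - apply Hc; lia.
    - assert (i = n) by lia. subst i. rewrite Hnm.
      replace (n + m - S n)%nat with (m - 1)%nat by lia.
      replace (ginv G (c' m) ** c' (m - 1)%nat) with (ginv G (ginv G (c' (m - 1)%nat) ** c' m)).
      + apply SS_inv. replace m with (S (m - 1)) at 2 by lia. apply Hc'; lia.
      + rewrite ginv_mul, ginv_inv. auto.
    - lia.
    - replace (ginv G (c' (n + m - i)%nat) ** c' (n + m - S i)%nat)
        with (ginv G (ginv G (c' (n + m - S i)%nat) ** c' (n + m - i)%nat)).
      + apply SS_inv. replace (n + m - i)%nat with (S (n + m - S i)) by lia. apply Hc'; lia.
      + rewrite ginv_mul, ginv_inv. auto. }
  assert (He0 : e 0%nat = gone G).
  { unfold e. destruct (le_lt_dec 0 n); [auto|lia]. }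
  assert (Hen : e (n + m)%nat = gone G).
  { unfold e. destruct (le_lt_dec (n + m) n).
    + assert (m = 0%nat) by lia. subst. rewrite Nat.add_0_r in *. rewrite Hnm. auto.
    + rewrite Nat.sub_diag. auto. }
  pose proof (CL e (n + m) He He0 Hen) as HCL.
  unfold cprod in HCL. rewrite prodH_add in HCL.
  assert (E1 : prodH H (fun i => phi (ginv G (e i) ** e (S i))) n = cprod c n).
  { apply prodH_ext. intros i Hi. unfold e. destruct (le_lt_dec i n); [|lia].
    destruct (le_lt_dec (S i) n); [|lia]. auto. }
  assert (E2 : prodH H (fun j => phi (ginv G (e (n + j)%nat) ** e (S (n + j))))  m = ginv H (cprod c' m)).
  { unfold cprod. rewrite <- prodH_rev. apply prodH_ext. intros j Hj. unfold e.
    destruct (le_lt_dec (n + j) n); destruct (le_lt_dec (S (n + j)) n); try lia.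
    - assert (j = 0%nat) by lia. subst j.
      replace (n + m - S (n + 0))%nat with (m - 1)%nat by lia.
      replace (m - 1 - 0)%nat with (m - 1)%nat by lia.
      replace (S (m - 1)) with m by lia.
      rewrite Nat.add_0_r, Hnm.
      rewrite <- phi_inv. rewrite ginv_mul, ginv_inv. auto.
      pose proof (Hc' (m - 1)%nat ltac:(lia)) as HH. replace (S (m - 1)) with m in HH by lia. exact HH.
    - replace (n + m - (n + j))%nat with (S (m - 1 - j)) by lia.
      replace (n + m - S (n + j))%nat with (m - 1 - j)%nat by lia.
      rewrite <- phi_inv. rewrite ginv_mul, ginv_inv. auto. apply Hc'; lia. }
  rewrite E1, E2 in HCL.
  assert (HH : ginv H (cprod c' m) = ginv H (cprod c n)) by (apply ginv_unique; auto).
  rewrite <- (ginv_inv H (cprod c n)), <- HH, ginv_inv. auto.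
Qed.

Lemma ext : exists Psi : G -> H, ishom G H Psi /\ forall s, SS s -> Psi s = phi s.
Proof.
  assert (Hch : forall a, {p : nat * (nat -> G) | cay (snd p) (fst p) /\ snd p 0%nat = gone G /\ snd p (fst p) = a}).
  { intro a. apply constructive_indefinite_description. destruct (gen a) as [c [n [A [B C]]]].
    exists (n, c). simpl. auto. }
  set (Psi := fun a => cprod (snd (proj1_sig (Hch a))) (fst (proj1_sig (Hch a)))).
  assert (Hval : forall a c n, cay c n -> c 0%nat = gone G -> c n = a -> Psi a = cprod c n).
  { intros a c n Hc Hc0 Hcn. unfold Psi. destruct (proj2_sig (Hch a)) as [A [B C]].
    apply wd; auto. rewrite C. auto. }
  exists Psi. split.
  - intros a b'.
    destruct (gen a) as [c [n [A1 [B1 C1]]]]. destruct (gen b') as [c' [m [A2 [B2 C2]]]].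
    set (e := fun i => if le_lt_dec i n then c i else a ** c' (i - n)%nat).
    assert (He : cay e (n + m)).
    { intros i Hi. unfold e. destruct (le_lt_dec i n); destruct (le_lt_dec (S i) n).
      - apply A1; lia.
      - assert (i = n) by lia. subst i. rewrite C1. rewrite <- (gmul1r G a) at 1. rewrite <- B2, gshift.
        replace (S n - n)%nat with 1%nat by lia. apply A2; lia.
      - lia.
      - rewrite gshift. replace (S i - n)%nat with (S (i - n)) by lia. apply A2; lia. }
    rewrite (Hval (a ** b') e (n + m)%nat); auto.
    + rewrite (Hval a c n), (Hval b' c' m); auto. unfold cprod. rewrite prodH_add. f_equal.
      * apply prodH_ext. intros i Hi. unfold e. destruct (le_lt_dec i n); [|lia].
        destruct (le_lt_dec (S i) n); [auto|lia].
      * apply prodH_ext. intros j Hj. unfold e.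
        destruct (le_lt_dec (n + j) n); destruct (le_lt_dec (S (n + j)) n); try lia.
        -- assert (j = 0%nat) by lia. subst j. rewrite Nat.add_0_r, C1.
           rewrite <- (gmul1r G a) at 1. rewrite <- B2, gshift. f_equal. f_equal. f_equal. lia.
        -- rewrite gshift. replace (n + j - n)%nat with j by lia. replace (S (n + j) - n)%nat with (S j) by lia. auto.
    + unfold e. destruct (le_lt_dec (n + m) n).
      * assert (m = 0%nat) by lia. subst m. rewrite Nat.add_0_r, C1, <- C2, B2, gmul1r. auto.
      * replace (n + m - n)%nat with m by lia. rewrite C2. auto.
  - intros s Hs. rewrite (Hval s (fun k => if Nat.eq_dec k 0 then gone G else s) 1%nat).
    + unfold cprod. simpl. rewrite gmul1l, ginv_one, gmul1l. auto.
    + intros i Hi. assert (i = 0%nat) by lia. subst. simpl. rewrite ginv_one, gmul1l. auto.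
    + auto.
    + auto.
Qed.

End Ext.

Lemma delta_ex (G : Group) (X : Type) (d : X -> X -> R) (act : G -> X -> X) (D : R) (x0 : X) :
  0 < D -> proper_action G X d act ->
  exists delta, 0 < delta /\ forall a, d x0 (act a x0) < 2*D + 3*delta -> d x0 (act a x0) <= 2*D.
Proof.
  intros HD Hp. destruct (Hp (2 * D + 1) x0 ltac:(lra)) as [L HL].
  assert (Hl : forall L' : list G, exists delta, 0 < delta /\ delta <= 1/3 /\ forall a, In a L' ->
      d x0 (act a x0) <= 2 * D \/ 2 * D + 3 * delta <= d x0 (act a x0)).
  { induction L' as [|a0 L' IH].
    - exists (1/3). split; [lra|split;[lra|]]. intros a [].
    - destruct IH as [de [H1 [H2 H3]]].
      destruct (Rle_or_lt (d x0 (act a0 x0)) (2 * D)) as [Ha|Ha].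
      + exists de. split; [auto|split;[auto|]]. intros a [<-|Hin]; auto.
      + set (de' := Rmin de ((d x0 (act a0 x0) - 2 * D) / 3)).
        assert (0 < de') by (apply Rmin_pos; lra).
        assert (de' <= de) by apply Rmin_l. assert (de' <= (d x0 (act a0 x0) - 2 * D) / 3) by apply Rmin_r.
        exists de'. split; [auto|split;[lra|]]. intros a [<-|Hin]; [right; lra|].
        destruct (H3 a Hin); [left; auto| right; lra]. }
  destruct (Hl L) as [de [H1 [H2 H3]]]. exists de. split; auto.
  intros a Ha. destruct (H3 a) as [?|?]; auto; [apply HL; lra| lra].
Qed.

Fixpoint lindex {T : Type} (x : T) (l : list T) : nat :=
  match l with
  | nil => O
  | y :: l' => if excluded_middle_informative (x = y) then O else S (lindex x l')
  end.

Lemma lindex_le {T} (x : T) l : (lindex x l <= length l)%nat.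
Proof. induction l; simpl; auto. destruct (excluded_middle_informative _); lia. Qed.

Lemma lindex_in {T} (x : T) l dflt : In x l -> (lindex x l < length l)%nat /\ nth (lindex x l) l dflt = x.
Proof.
  induction l; simpl; [tauto|]. intro Hin. destruct (excluded_middle_informative (x = a)).
  - split; [lia|auto].
  - destruct Hin as [->|Hin]; [tauto|]. destruct (IHl Hin). split; [lia|auto].
Qed.

Lemma lindex_lt {T} (x : T) l : (lindex x l < length l)%nat -> In x l.
Proof.
  induction l; simpl; [lia|]. destruct (excluded_middle_informative (x = a)); auto.
  intro. right. apply IHl. lia.
Qed.

Lemma lindex_nth {T} (l : list T) i dflt : NoDup l -> (i < length l)%nat -> lindex (nth i l dflt) l = i.
Proof.
  revert i. induction l as [|a l IH]; simpl; intros i Hnd Hi; [lia|].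
  inversion Hnd; subst. destruct i as [|i].
  - destruct (excluded_middle_informative (a = a)); [auto|congruence].
  - destruct (excluded_middle_informative (nth i l dflt = a)) as [E|].
    + exfalso. apply H1. rewrite <- E. apply nth_In. lia.
    + f_equal. apply IH; auto. lia.
Qed.

Lemma nth_map_seq (f : nat -> nat) k n : (k < n)%nat -> nth k (map f (seq 0 n)) O = f k.
Proof.
  intro Hk. rewrite (nth_indep _ _ (f O)) by (rewrite length_map, length_seq; auto).
  rewrite map_nth, seq_nth by auto. auto.
Qed.

Definition table (G : Group) (l : list G) : list nat :=
  map (fun p => lindex (nth (p / length l) l (gone G) ** nth (p mod length l) l (gone G)) l)
      (seq 0 (length l * length l)).

Definition HasCode (D : R) (G : Group) (c : nat * list nat) : Prop :=
  exists (X : Type) (d : X -> X -> R) (act : G -> X -> X),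
    is_metric X d /\ length_space X d /\ simply_connected X d /\
    isometric_action G X d act /\ proper_action G X d act /\
    quotient_diam_le G X d act D /\
    exists (x0 : X) (l : list G), NoDup l /\ (forall a, d x0 (act a x0) <= 2 * D <-> In a l) /\
      c = (length l, table G l).

Lemma table_nth (G : Group) (l : list G) i j : (i < length l)%nat -> (j < length l)%nat ->
  nth (i * length l + j) (table G l) O = lindex (nth i l (gone G) ** nth j l (gone G)) l.
Proof.
  intros Hi Hj. unfold table. rewrite nth_map_seq by nia.
  destruct (divmod_eq i j (length l) Hj) as [-> ->]. auto.
Qed.

Lemma same_table (G G' : Group) (l : list G) (l' : list G') :
  NoDup l -> NoDup l' -> length l = length l' -> table G l = table G' l' ->
  forall i j m, (i < length l)%nat -> (j < length l)%nat -> (m < length l)%nat ->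
  nth i l (gone G) ** nth j l (gone G) = nth m l (gone G) ->
  nth i l' (gone G') ** nth j l' (gone G') = nth m l' (gone G').
Proof.
  intros Hn Hn' Hlen Ht i j m Hi Hj Hm E.
  pose proof (table_nth G l i j Hi Hj) as T1.
  pose proof (table_nth G' l' i j ltac:(lia) ltac:(lia)) as T2.
  rewrite E, lindex_nth in T1 by auto. rewrite <- Hlen, <- Ht, T1 in T2.
  assert (Hlt : (lindex (nth i l' (gone G') ** nth j l' (gone G')) l' < length l')%nat) by (rewrite <- T2; lia).
  pose proof (lindex_in _ _ (gone G') (lindex_lt _ _ Hlt)) as [_ Hnth].
  rewrite <- T2 in Hnth. auto.
Qed.

Lemma half (D : R) (G G' : Group) (X : Type) (d : X -> X -> R) (act : G -> X -> X) (x0 : X) (l : list G) (l' : list G') :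
  0 < D -> is_metric X d -> length_space X d -> simply_connected X d ->
  isometric_action G X d act -> proper_action G X d act -> quotient_diam_le G X d act D ->
  NoDup l -> (forall a, d x0 (act a x0) <= 2 * D <-> In a l) ->
  NoDup l' -> length l = length l' -> table G l = table G' l' ->
  exists Psi : G -> G', ishom G G' Psi /\ forall i, (i < length l)%nat -> Psi (nth i l (gone G)) = nth i l' (gone G').
Proof.
  intros HD Hmet Hlen Hsc Hact Hprop Hdiam Hnd Hl Hnd' Hlen' Ht.
  destruct (delta_ex G X d act D x0 HD Hprop) as [delta [Hdl Hdel]].
  set (phi := fun a => nth (lindex a l) l' (gone G')).
  destruct (ext G X d act D x0 delta Hmet Hlen Hsc Hact HD Hdl Hdiam Hdel G' phi) as [Psi [HPsi HPsiS]].
  - intros s t Hs Ht' Hst. apply Hl in Hs, Ht', Hst. unfold phi.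
    destruct (lindex_in s l (gone G) Hs) as [Is Ns].
    destruct (lindex_in t l (gone G) Ht') as [It Nt].
    destruct (lindex_in (s ** t) l (gone G) Hst) as [Ist Nst].
    symmetry. apply (same_table G G' l l'); auto. rewrite Ns, Nt, Nst. auto.
  - exists Psi. split; auto. intros i Hi. rewrite HPsiS.
    + unfold phi. rewrite lindex_nth; auto.
    + apply Hl. apply nth_In. auto.
Qed.

Lemma iso_code (D : R) (G G' : Group) c : 0 < D -> HasCode D G c -> HasCode D G' c -> group_iso G G'.
Proof.
  intros HD [X [d [act [Hmet [Hlen [Hsc [Hact [Hprop [Hdiam [x0 [l [Hnd [Hl Hc]]]]]]]]]]]]]
             [X' [d' [act' [Hmet' [Hlen' [Hsc' [Hact' [Hprop' [Hdiam' [x0' [l' [Hnd' [Hl' Hc']]]]]]]]]]]]].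
  rewrite Hc in Hc'. injection Hc' as E1 E2.
  destruct (half D G G' X d act x0 l l' HD Hmet Hlen Hsc Hact Hprop Hdiam Hnd Hl Hnd' E1 E2) as [P [HP HPn]].
  destruct (half D G' G X' d' act' x0' l' l HD Hmet' Hlen' Hsc' Hact' Hprop' Hdiam' Hnd' Hl' Hnd (eq_sym E1) (eq_sym E2))
    as [Q [HQ HQn]].
  destruct (delta_ex G X d act D x0 HD Hprop) as [delta [Hdl Hdel]].
  destruct (delta_ex G' X' d' act' D x0' HD Hprop') as [delta' [Hdl' Hdel']].
  assert (QP : forall a, Q (P a) = a).
  { intro a. apply (hom_unique G X d act D x0 delta Hmet Hsc Hact HD Hdl Hdiam Hdel G (fun a => Q (P a)) (fun a => a)).
    - intros u v. rewrite HP, HQ. auto.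
    - intros u v. auto.
    - intros s Hs. apply Hl in Hs. destruct (lindex_in s l (gone G) Hs) as [I Nn].
      rewrite <- Nn, HPn, HQn; auto; lia. }
  assert (PQ : forall a, P (Q a) = a).
  { intro a. apply (hom_unique G' X' d' act' D x0' delta' Hmet' Hsc' Hact' HD Hdl' Hdiam' Hdel' G' (fun a => P (Q a)) (fun a => a)).
    - intros u v. rewrite HQ, HP. auto.
    - intros u v. auto.
    - intros s Hs. apply Hl' in Hs. destruct (lindex_in s l' (gone G') Hs) as [I Nn].
      rewrite <- Nn, HQn, HPn; auto; lia. }
  exists P. split; [exact HP|split].
  - intros a b E. rewrite <- (QP a), <- (QP b), E. auto.
  - intro y. exists (Q y). auto.
Qed.

Fixpoint all_lists (b L : nat) : list (list nat) :=
  match L with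
  | O => nil :: nil
  | S L' => flat_map (fun x => map (cons x) (all_lists b L')) (seq 0 b)
  end.

Lemma length_flat_map_sum {A B} (f : A -> list B) l :
  length (flat_map f l) = list_sum (map (fun x => length (f x)) l).
Proof. induction l; simpl; auto. rewrite length_app, IHl. auto. Qed.

Lemma list_sum_le {A} (f g : A -> nat) l : (forall x, In x l -> (f x <= g x)%nat) ->
  (list_sum (map f l) <= list_sum (map g l))%nat.
Proof. induction l; simpl; intros; auto. specialize (IHl (fun x h => H x (or_intror h))). specialize (H a (or_introl eq_refl)). lia. Qed.

Lemma all_lists_length b L : length (all_lists b L) = (b ^ L)%nat.
Proof.
  induction L; simpl; auto. rewrite length_flat_map_sum.
  rewrite (map_ext _ (fun _ => (b ^ L)%nat)) by (intro; rewrite length_map; auto).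
  clear IHL. generalize (b ^ L)%nat as c. intro c.
  assert (forall l : list nat, list_sum (map (fun _ => c) l) = (length l * c)%nat).
  { induction l; simpl; auto; try (rewrite IHl; lia). }
  now rewrite H, length_seq.
Qed.

Lemma all_lists_in b L T : length T = L -> (forall x, In x T -> (x < b)%nat) -> In T (all_lists b L).
Proof.
  revert T. induction L; intros T HT Hb.
  - destruct T; [left; auto| simpl in HT; lia].
  - destruct T as [|x T]; [simpl in HT; lia|]. simpl. apply in_flat_map. exists x. split.
    + apply in_seq. specialize (Hb x (or_introl eq_refl)). lia.
    + apply in_map. apply IHL; [simpl in HT; lia|]. intros; apply Hb; right; auto.
Qed.

Definition codes (N : nat) : list (nat * list nat) :=
  flat_map (fun k => map (fun t => (k, t)) (all_lists (S k) (k * k))) (seq 0 (S N)).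

Lemma codes_length N : (length (codes N) <= qbound N)%nat.
Proof.
  unfold codes, qbound. rewrite length_flat_map_sum. apply list_sum_le. intros k _.
  rewrite length_map, all_lists_length.
  assert (S k <= 2 ^ k)%nat by (apply Nat.pow_gt_lin_r; lia).
  apply Nat.le_trans with ((2 ^ k) ^ (k * k))%nat; [apply Nat.pow_le_mono_l; auto|].
  rewrite <- Nat.pow_mul_r. apply Nat.pow_le_mono_r; [lia|]. simpl. nia.
Qed.

Definition trivG : Group.
Proof.
  refine (MkGroup unit (fun _ _ => tt) tt (fun _ => tt) _ _ _ _ _); intros; repeat match goal with a : unit |- _ => destruct a end; reflexivity.
Defined.

Theorem mainTheorem2 (N : nat) (D : R) (hN : (1 <= N)%nat) (hD : 0 < D) :
  exists (n : nat) (Gs : nat -> Group),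
    (n <= qbound N)%nat /\
    forall G : Group, admissible N D G ->
      exists i, (i < n)%nat /\ group_iso G (Gs i).
Proof.
  set (cs := codes N).
  set (Gs := fun i => match excluded_middle_informative (exists G, HasCode D G (nth i cs (O, nil))) with
                      | left h => proj1_sig (constructive_indefinite_description _ h)
                      | right _ => trivG end).
  exists (length cs), Gs. split; [apply codes_length|].
  intros G [X [d [act [Hmet [Hlen [Hsc [Hact [Hprop [Hdiam [x [l0 [Hl0len Hl0]]]]]]]]]]]].
  set (l := nodup (fun a b => excluded_middle_informative (a = b))
              (filter (fun a => if excluded_middle_informative (d x (act a x) <= 2 * D) then true else false) l0)).
  assert (Hnd : NoDup l) by apply NoDup_nodup.
  assert (Hl : forall a, d x (act a x) <= 2 * D <-> In a l).
  { intro a. unfold l. rewrite nodup_In, filter_In. split.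
    - intro Ha. split; [apply Hl0; exact Ha|]. destruct (excluded_middle_informative _); auto.
    - intros [_ Ha]. destruct (excluded_middle_informative _); auto. discriminate. }
  assert (Hll : (length l <= N)%nat).
  { eapply Nat.le_trans; [|exact Hl0len]. apply NoDup_incl_length; auto.
    intros a Ha. apply Hl0. apply Hl. auto. }
  set (c := (length l, table G l)).
  assert (HC : HasCode D G c).
  { exists X, d, act. repeat (split; auto). exists x, l. repeat split; auto; apply Hl; auto. }
  assert (Hin : In c cs).
  { unfold cs, codes. apply in_flat_map. exists (length l). split; [apply in_seq; lia|].
    apply in_map. apply all_lists_in.
    - unfold table. rewrite length_map, length_seq. auto.
    - intros y Hy. unfold table in Hy. apply in_map_iff in Hy. destruct Hy as [p [<- _]].
      pose proof (lindex_le (nth (p / length l) l (gone G) ** nth (p mod length l) l (gone G)) l). lia. }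
  destruct (In_nth cs c (O, nil) Hin) as [i [Hi Hic]].
  exists i. split; auto. unfold Gs.
  destruct (excluded_middle_informative _) as [h|h].
  - apply (iso_code D G _ c hD HC). rewrite <- Hic. exact (proj2_sig (constructive_indefinite_description _ h)).
  - exfalso. apply h. exists G. rewrite Hic. auto.
Qed.
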